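(* With the notation of the context, let $\beta^*=\inf_{x\in\Delta}F(x)$ and $\alpha^*=\inf_{x\in\Delta}G(x)$. Then $1<\beta^*\le\alpha^*\le\alpha_n$.
   Context: Fix an integer $n\ge2$ and free generators $\xi_1,\dots,\xi_n$ of a free group; throughout $i,j,k\in\{1,\dots,n\}$ and $t,s,p\in\{-1,+1\}$. Let $\Psi$ be the set of reduced words $\xi_i^{2t}$; $\xi_i^t\xi_j^{2s}$ ($i\ne j$); $\xi_i^t\xi_j^s\xi_k^p$ ($i\ne j$, $j\ne k$). For a letter $\xi_a^x$ let $S(\xi_a^x)\subset\Psi$ be the set of words in $\Psi$ beginning with $\xi_a^x$, namely $\{\xi_a^{2x}\}\cup\{\xi_a^x\xi_j^{2s}\}\cup\{\xi_a^x\xi_j^s\xi_k^p\}$; for $a\ne b$ let $S(\xi_a^x\xi_b^y)=\{\xi_a^x\xi_b^{2y}\}\cup\{\xi_a^x\xi_b^y\xi_k^p: k\ne b\}$. A relation $r$ is a pair $(\psi_r,\Psi_r)$ with $\psi_r\in\Psi$, $\Psi_r\subseteq\Psi$; the relations considered are (indices $i_0\ne j_0$, in type 5 $i_0,j_0,k_0$ pairwise distinct, all signs arbitrary): 1a: $\psi_r=\xi_{i_0}^{2t_0}$, $\Psi_r=\Psi\setminus S(\xi_{i_0}^{t_0})$; 1b: $\psi_r=\xi_{i_0}^{2t_0}$, $\Psi_r=\Psi\setminus\{\xi_{i_0}^{t_0}\xi_{j_0}^{s_0}\xi_{i_0}^{t_0}\}$; 2a: $\psi_r=\xi_{i_0}^{t_0}\xi_{j_0}^{2s_0}$,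 $\Psi_r=\Psi\setminus\{\xi_{j_0}^{2s_0}\}$; 2b: $\psi_r=\xi_{i_0}^{t_0}\xi_{j_0}^{2s_0}$, $\Psi_r=\Psi\setminus S(\xi_{i_0}^{t_0}\xi_{j_0}^{s_0})$; 3a: $\psi_r=\xi_{i_0}^{t_0}\xi_{j_0}^{s_0}\xi_{i_0}^{t_0}$, $\Psi_r=\Psi\setminus S(\xi_{j_0}^{s_0}\xi_{i_0}^{t_0})$; 3b: $\psi_r=\xi_{i_0}^{t_0}\xi_{j_0}^{s_0}\xi_{i_0}^{t_0}$, $\Psi_r=\Psi\setminus\{\xi_{i_0}^{2t_0}\}$; 4a: $\psi_r=\xi_{i_0}^{t_0}\xi_{j_0}^{s_0}\xi_{i_0}^{-t_0}$, $\Psi_r=\Psi\setminus S(\xi_{j_0}^{s_0}\xi_{i_0}^{-t_0})$; 4b: $\psi_r=\xi_{i_0}^{t_0}\xi_{j_0}^{s_0}\xi_{i_0}^{-t_0}$, $\Psi_r=S(\xi_{i_0}^{t_0})$; 5a: $\psi_r=\xi_{i_0}^{t_0}\xi_{j_0}^{s_0}\xi_{k_0}^{p_0}$, $\Psi_r=\Psi\setminus S(\xi_{j_0}^{s_0}\xi_{k_0}^{p_0})$; 5b: $\psi_r=\xi_{i_0}^{t_0}\xi_{j_0}^{s_0}\xi_{k_0}^{p_0}$, $\Psi_r=\Psi\setminus S(\xi_{i_0}^{t_0}\xi_{k_0}^{p_0})$. Let $\mathcal{G}$ be the collection of all these relations and $\mathcal{F}\subset\mathcal{G}$ those of types 1a,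 2b, 3a, 4b, 5a. Let $\Delta=\{x\in\mathbb{R}^\Psi: x(\psi)>0\ \forall\psi,\ \sum_{\psi}x(\psi)=1\}$. For a relation $r$ and $x\in\Delta$ put $x_r=x(\psi_r)$, $X_r=\sum_{\psi\in\Psi_r}x(\psi)$, $f_r(x)=\frac{1-x_r}{x_r}\cdot\frac{1-X_r}{X_r}$, $F(x)=\max_{r\in\mathcal{F}}f_r(x)$, $G(x)=\max_{r\in\mathcal{G}}f_r(x)$. The number $\alpha_n$ is the unique real root greater than $(2n-1)^2$ of $\mathcal{P}(\lambda)=(8n^3-12n^2+2n+1)\lambda^4+(-64n^6+192n^5-192n^4+64n^3+4n^2+2n-4)\lambda^3+(-96n^5+224n^4-168n^3+52n^2-18n+6)\lambda^2+(32n^5-112n^4+128n^3-68n^2+22n-4)\lambda+16n^4-32n^3+24n^2-8n+1.$ *)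

(* Defs.v *)
From HB Require Import structures.
From mathcomp Require Import all_boot all_order all_algebra.
From mathcomp Require Import boolp classical_sets reals.
Set Implicit Arguments. Unset Strict Implicit. Unset Printing Implicit Defensive.
Import Order.TTheory GRing.Theory Num.Theory.
Local Open Scope ring_scope.

(* A letter xi_i^t : generator index i : 'I_n, sign t (true = +1, false = -1). *)
Definition letter (n : nat) := ('I_n * bool)%type.
Definition linv n (a : letter n) : letter n := (a.1, ~~ a.2).

Definition raw (n : nat) := (letter n * letter n + letter n * letter n * letter n)%type.

Definition word n (w : raw n) : seq (letter n) :=
  match w with
  | inl (a, b) => [:: a; b]
  | inr (a, b, c) => [:: a; b; c]
  end.

(* Membership in Psi:  xi_i^{2t} = a a ;  xi_i^t xi_j^{2s} = a b b (i<>j);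
   xi_i^t xi_j^s xi_k^p = a b c (i<>j, j<>k). *)
Definition isPsi n (w : raw n) : bool :=
  match w with
  | inl (a, b) => a == b
  | inr (a, b, c) => (a.1 != b.1) && ((b == c) || (b.1 != c.1))
  end.

Definition Psi (n : nat) := {w : raw n | isPsi w}.
Definition pword n (w : Psi n) : seq (letter n) := word (val w).

Definition S1 n (a : letter n) : {set Psi n} :=
  [set w : Psi n | take 1 (pword w) == [:: a]].
(* S(xi_a^x xi_b^y) (a, b with distinct generators): the words of Psi of the
   form xi_a^x xi_b^{2y} or xi_a^x xi_b^y xi_k^p (k <> b), i.e. the
   three-letter words of Psi beginning with a b. *)
Definition S2 n (a b : letter n) : {set Psi n} :=
  [set w : Psi n | (size (pword w) == 3%N) && (take 2 (pword w) == [:: a; b])].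
Definition Sw n (s : seq (letter n)) : {set Psi n} := [set w : Psi n | pword w == s].

Definition relation (n : nat) := (Psi n * {set Psi n})%type.

Section Rels.
Variable n : nat.
Implicit Types (r : relation n).

Definition is1a r := [exists a : letter n,
  (pword r.1 == [:: a; a]) && (r.2 == ~: S1 a)].
Definition is1b r := [exists a : letter n, exists b : letter n,
  [&& a.1 != b.1, pword r.1 == [:: a; a] & r.2 == ~: Sw [:: a; b; a]]].
Definition is2a r := [exists a : letter n, exists b : letter n,
  [&& a.1 != b.1, pword r.1 == [:: a; b; b] & r.2 == ~: Sw [:: b; b]]].
Definition is2b r := [exists a : letter n, exists b : letter n,
  [&& a.1 != b.1, pword r.1 == [:: a; b; b] & r.2 == ~: S2 a b]].
Definition is3a r := [exists a : letter n, exists b : letter n,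
  [&& a.1 != b.1, pword r.1 == [:: a; b; a] & r.2 == ~: S2 b a]].
Definition is3b r := [exists a : letter n, exists b : letter n,
  [&& a.1 != b.1, pword r.1 == [:: a; b; a] & r.2 == ~: Sw [:: a; a]]].
Definition is4a r := [exists a : letter n, exists b : letter n,
  [&& a.1 != b.1, pword r.1 == [:: a; b; linv a] & r.2 == ~: S2 b (linv a)]].
Definition is4b r := [exists a : letter n, exists b : letter n,
  [&& a.1 != b.1, pword r.1 == [:: a; b; linv a] & r.2 == S1 a]].
Definition is5a r := [exists a : letter n, exists b : letter n, exists c : letter n,
  [&& a.1 != b.1, b.1 != c.1, a.1 != c.1, pword r.1 == [:: a; b; c] & r.2 == ~: S2 b c]].
Definition is5b r := [exists a : letter n, exists b : letter n, exists c : letter n,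
  [&& a.1 != b.1, b.1 != c.1, a.1 != c.1, pword r.1 == [:: a; b; c] & r.2 == ~: S2 a c]].

Definition inF r := [|| is1a r, is2b r, is3a r, is4b r | is5a r].
Definition inG r := [|| is1a r, is1b r, is2a r, is2b r, is3a r, is3b r, is4a r,
  is4b r, is5a r | is5b r].
End Rels.

Section Values.
Variables (R : realType) (n : nat).

Definition Delta : set (Psi n -> R) :=
  [set x | (forall psi, 0 < x psi) /\ \sum_(psi : Psi n) x psi = 1].

Definition xr (x : Psi n -> R) (r : relation n) : R := x r.1.
Definition Xr (x : Psi n -> R) (r : relation n) : R := \sum_(psi in r.2) x psi.
Definition fr (r : relation n) (x : Psi n -> R) : R :=
  (1 - xr x r) / xr x r * ((1 - Xr x r) / Xr x r).

(* F(x) = max_{r in F} f_r(x), G(x) = max_{r in G} f_r(x)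
   (these collections are finite and nonempty, and f_r > 0 on Delta). *)
Definition Fmax (x : Psi n -> R) : R := \big[Num.max/0]_(r | inF r) fr r x.
Definition Gmax (x : Psi n -> R) : R := \big[Num.max/0]_(r | inG r) fr r x.

Definition beta_star : R := inf [set Fmax x | x in Delta].
Definition alpha_star : R := inf [set Gmax x | x in Delta].

Definition Pn (l : R) : R :=
  let N := n%:R : R in
  (8*N^+3 - 12*N^+2 + 2*N + 1) * l^+4
  + (-64*N^+6 + 192*N^+5 - 192*N^+4 + 64*N^+3 + 4*N^+2 + 2*N - 4) * l^+3
  + (-96*N^+5 + 224*N^+4 - 168*N^+3 + 52*N^+2 - 18*N + 6) * l^+2
  + (32*N^+5 - 112*N^+4 + 128*N^+3 - 68*N^+2 + 22*N - 4) * l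
  + (16*N^+4 - 32*N^+3 + 24*N^+2 - 8*N + 1).
End Values.

(* Main.v *)
Require Import Defs.
From HB Require Import structures.
From mathcomp Require Import all_boot all_order all_algebra.
From mathcomp Require Import boolp classical_sets reals.
From mathcomp Require Import ring lra.
Import Order.TTheory GRing.Theory Num.Theory.
Set Implicit Arguments. Unset Strict Implicit.
Local Open Scope ring_scope.

Definition PN {R : realType} (N l : R) : R :=
  (8*N^+3 - 12*N^+2 + 2*N + 1) * l^+4
  + (-64*N^+6 + 192*N^+5 - 192*N^+4 + 64*N^+3 + 4*N^+2 + 2*N - 4) * l^+3
  + (-96*N^+5 + 224*N^+4 - 168*N^+3 + 52*N^+2 - 18*N + 6) * l^+2
  + (32*N^+5 - 112*N^+4 + 128*N^+3 - 68*N^+2 + 22*N - 4) * l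
  + (16*N^+4 - 32*N^+3 + 24*N^+2 - 8*N + 1).

Lemma PnE (R : realType) n (l : R) : Pn n l = PN (n%:R : R) l.
Proof. by []. Qed.

Section Alg.
Variables (R : realType) (N a : R).
Definition mm : R := 2 * N.
Definition KK : R := 2 * N - 2.
Definition pp : R := 1 / (1 + a * (mm - 1)).
Definition tt : R := (1 / mm - pp) / KK.
Definition vv : R := (mm - 1) / (a + mm - 1).
Definition yy : R := (tt - vv) / KK.


Lemma a_ge (hN : 2 <= N) (ha : (2 * N - 1) ^+ 2 < a) : 9 <= a.
Proof.
have h1 : 0 <= (N - 2) * (N + 1) by apply: mulr_ge0; lra.
have h : 9 <= (2 * N - 1) ^+ 2.
  have -> : (2 * N - 1) ^+ 2 = 9 + 4 * ((N - 2) * (N + 1)) by ring.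
  lra.
lra. Qed.

Lemma tt_eq (hN : 2 <= N) (ha : (2 * N - 1) ^+ 2 < a) : tt = (mm - 1) * (a - 1) / (mm * KK * (1 + a * (mm - 1))).
Proof.
have h9 := a_ge hN ha.
rewrite /tt /pp /mm /KK. field.
by apply/and3P; split; apply/eqP; nra.
Qed.

Lemma key_poly (hN : 2 <= N) (ha : (2 * N - 1) ^+ 2 < a) : a * (tt - vv) * (1 - tt) - (KK - tt + vv) * tt =
  (mm - 1) * PN N a / ((mm * KK * (1 + a * (mm - 1)))^+2 * (a + mm - 1)).
Proof.
have h9 := a_ge hN ha.
rewrite tt_eq // /vv /PN /mm /KK. field.
by apply/and4P; split; apply/eqP; nra.
Qed.
End Alg.

Definition f2 {R : realType} (x X : R) := (1 - x) / x * ((1 - X) / X).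

Lemma f2_le (R : realType) (x X a : R) : 0 < x -> 0 < X ->
  (1 - x) * (1 - X) <= a * (x * X) -> f2 x X <= a.
Proof.
move=> hx hX h. rewrite /f2 mulrACA -invfM ler_pdivrMr; last exact: mulr_gt0.
by [].
Qed.

Section Alg2.
Variables (R : realType) (N a : R).
Hypothesis hN : 2 <= N.
Hypothesis ha : (2 * N - 1) ^+ 2 < a.
Hypothesis hP : PN N a = 0.

Record facts (p v t y m K a : R) : Prop := Facts {
  pp_gt0 : 0 < p; pp_lt1 : p < 1;
  tt_gt0 : 0 < t; tt_lt1 : t < 1;
  vv_gt0 : 0 < v; vv_lt1 : v < 1;
  yy_gt0 : 0 < y; yy_lt1 : y < 1;
  sum1 : p + K * t = 1 / m;
  sum2 : v + K * y = t;
  mmE : m = 2 * N;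
  KKE : K = 2 * N - 2;
  c1 : f2 p (1 - 1 / m) <= a;
  c2 : f2 p (1 - y) <= a;
  c3 : f2 y (1 - p) <= a;
  c4 : f2 y (1 - t) <= a;
  c5 : f2 v (1 - t) <= a;
  c6 : f2 v (1 / m) <= a }.

Lemma all_facts : facts (pp N a) (vv N a) (tt N a) (yy N a) (mm N) (KK N) a.
Proof.
move: hN ha hP => hN' ha' hP'.
have h9 := a_ge hN' ha'.
have hkey := key_poly hN' ha'.
have htt := tt_eq hN' ha'.
rewrite hP' mulr0 mul0r in hkey.
have Epp : pp N a * (1 + a * (mm N - 1)) = 1.
  rewrite /pp /mm; field; apply/eqP; nra.
have Evv : vv N a * (a + mm N - 1) = mm N - 1.
  rewrite /vv /mm; field; apply/eqP; nra.
have Ett : tt N a * (mm N * KK N * (1 + a * (mm N - 1))) = (mm N - 1) * (a - 1).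
  rewrite htt /mm /KK; field; apply/and3P; split; apply/eqP; nra.
have Eyy : KK N * yy N a = tt N a - vv N a.
  rewrite /yy /KK; field; apply/eqP; nra.
have Esum : pp N a + KK N * tt N a = 1 / mm N.
  rewrite /tt /KK; field; apply/andP; split; apply/eqP; rewrite /mm; nra.
have hmm : mm N = 2 * N by [].
have hKK : KK N = 2 * N - 2 by [].
have ha2 : (mm N - 1) ^+ 2 < a by rewrite hmm.
move: Epp Evv Ett Eyy Esum hkey ha2 hmm hKK.
move: (pp N a) (vv N a) (tt N a) (yy N a) (mm N) (KK N) => p v t y m K.
move=> Epp Evv Ett Eyy Esum hkey ha2 hmm hKK.
clear htt hP' ha' hP ha.
have hm4 : 4 <= m by lra.
have hK2 : 2 <= K by lra.
have hKm : K = m - 2 by lra.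
have ham : 0 < a * (m - 1) by apply: mulr_gt0; lra.
have Q0 : 0 < 1 + a * (m - 1) by lra.
have Q1 : 1 + a * (m - 1) <= a * m.
  have -> : a * m = a * (m - 1) + a by ring.
  lra.
have hp0 : 0 < p by rewrite -(pmulr_lgt0 _ Q0) Epp.
have hp1 : p < 1 by rewrite -(ltr_pM2r Q0) Epp mul1r; lra.
have Epp' : 1 - p = a * (m - 1) * p by lra.
have Q3 : 0 < a + m - 1 by lra.
have hv0 : 0 < v by rewrite -(pmulr_lgt0 _ Q3) Evv; lra.
have hv1 : v < 1 by rewrite -(ltr_pM2r Q3) Evv mul1r; lra.
have Evv' : a * v = (m - 1) * (1 - v) by lra.
have Q2 : 0 < m * K * (1 + a * (m - 1)) by apply: mulr_gt0 => //; apply: mulr_gt0; lra.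
have ht0 : 0 < t.
  rewrite -(pmulr_lgt0 _ Q2) Ett; apply: mulr_gt0; lra.
have htmK : t * (m * K) <= 1.
  have : t * (m * K) * (1 + a * (m - 1)) <= 1 * (1 + a * (m - 1)).
    rewrite -mulrA Ett mul1r.
    have -> : (m - 1) * (a - 1) = a * (m - 1) - (m - 1) by ring.
    lra.
  by rewrite ler_pM2r.
have ht8 : t <= 1/8.
  have hmK : 8 <= m * K.
    have : 4 * 2 <= m * K by apply: ler_pM; lra.
    lra.
  have : t * 8 <= t * (m * K) by apply: ler_wpM2l; lra.
  lra.
have htv : 0 < t - v.
  case: (ltrP 0 (t - v)) => // h.
  have h1 : a * (t - v) * (1 - t) <= 0.
    rewrite -mulrA; apply: mulr_ge0_le0; first lra.
    apply: mulr_le0_ge0; lra.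
  have h2 : 0 < (K - t + v) * t by apply: mulr_gt0 => //; lra.
  lra.
have hK0 : 0 < K by lra.
have hy0 : 0 < y by rewrite -(pmulr_rgt0 _ hK0) Eyy.
have hy1 : y < 1.
  have : K * y < K * 1 by rewrite Eyy; lra.
  by rewrite ltr_pM2l.
have Ekey : (1 - y) * t = a * y * (1 - t).
  have : K * ((1 - y) * t - a * y * (1 - t)) = 0.
    have -> : K * ((1 - y) * t - a * y * (1 - t)) =
      - (a * (K * y) * (1 - t) - (K - K * y) * t) by ring.
    have E2 : K - K * y = K - t + v by rewrite Eyy; ring.
    by rewrite E2 Eyy hkey oppr0.
  move/eqP; rewrite mulf_eq0 => /orP [/eqP hK00|/eqP h]; first lra.
  lra.
have hmy : m * y <= 1.
  have h1 : K * (m * y) = m * (t - v) by rewrite mulrCA Eyy.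
  have h2 : m * (t - v) <= m * t by apply: ler_wpM2l; lra.
  have h3 : (m * t) * K <= 1.
    by have -> : m * t * K = t * (m * K) by ring.
  have h4 : (m * t) * 2 <= (m * t) * K by apply: ler_wpM2l => //; apply: mulr_ge0; lra.
  have : K * (m * y) <= K * 1 by lra.
  by rewrite ler_pM2l.
have hat : 1 <= a * (m - 1) * t.
  have e1 : a - 1 >= m * (m - 2).
    have : (m - 1) ^+ 2 = m * (m - 2) + 1 by ring.
    lra.
  have e2 : (m - 1) ^+ 2 * (a - 1) >= m * m * K.
    rewrite hKm.
    have : (m - 1) ^+ 2 * (a - 1) >= (m - 1) ^+ 2 * (m * (m - 2)).
      apply: ler_wpM2l => //; exact: sqr_ge0.
    have : (m - 1) ^+ 2 * (m * (m - 2)) >= m * m * (m - 2).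
      rewrite mulrA; apply: ler_wpM2r; first lra.
      have -> : (m - 1) ^+ 2 * m = m * m + m * (m * (m - 3) + 1) by ring.
      have h0 : 0 <= m * (m - 3) by apply: mulr_ge0; lra.
      have : 0 <= m * (m * (m - 3) + 1) by apply: mulr_ge0; lra.
      lra.
    lra.
  have e3 : a * (m - 1) ^+ 2 * (a - 1) >= m * K * (1 + a * (m - 1)).
    have : m * K * (1 + a * (m - 1)) <= m * K * (a * m).
      apply: ler_wpM2l => //; apply: mulr_ge0; lra.
    have : a * (m * m * K) <= a * ((m - 1) ^+ 2 * (a - 1)).
      apply: ler_wpM2l => //; lra.
    have -> : a * (m - 1) ^+ 2 * (a - 1) = a * ((m - 1) ^+ 2 * (a - 1)) by ring.
    have -> : m * K * (a * m) = a * (m * m * K) by ring.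
    lra.
  have : a * (m - 1) * t * (m * K * (1 + a * (m - 1))) >= 1 * (m * K * (1 + a * (m - 1))).
    have -> : a * (m - 1) * t * (m * K * (1 + a * (m - 1))) =
      a * (m - 1) * (t * (m * K * (1 + a * (m - 1)))) by ring.
    rewrite Ett; rewrite mul1r.
    have -> : a * (m - 1) * ((m - 1) * (a - 1)) = a * (m - 1) ^+ 2 * (a - 1) by ring.
    exact: e3.
  by rewrite ler_pM2r.
have im0 : 0 < 1 / m by rewrite divr_gt0 //; lra.
have Eim : m * (1 / m) = 1 by rewrite mul1r mulfV //; apply/eqP; lra.
have him1 : 1 / m < 1.
  case: (ltrP (1 / m) 1) => // h.
  have : 4 * 1 <= m * (1 / m) by apply: ler_pM; lra.
  lra.
apply: (Facts hp0 hp1 ht0 _ hv0 hv1 hy0 hy1 Esum _ hmm hKK); [lra|lra| | | | | | ].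
- move: Eim im0 him1; move: (1 / m) => im Eim im0 him1.
  apply: f2_le => //; first lra.
  rewrite -subr_ge0 Epp'.
  have -> : a * (p * (1 - im)) - a * (m - 1) * p * (1 - (1 - im)) = a * p * (1 - m * im) by ring.
  by rewrite Eim subrr mulr0.
- apply: f2_le => //; first lra.
  rewrite -subr_ge0.
  have -> : a * (p * (1 - y)) - (1 - p) * (1 - (1 - y)) = a * p * (1 - m * y) by rewrite Epp'; ring.
  apply: mulr_ge0; [apply: mulr_ge0|]; lra.
- apply: f2_le => //; first lra.
  have -> : (1 - y) * (1 - (1 - p)) = (1 - y) * p by ring.
  rewrite Epp'.
  rewrite -(ler_pM2r ht0).
  have -> : (1 - y) * p * t = (p * a * y) * (1 - t).
    have -> : (1 - y) * p * t = p * ((1 - y) * t) by ring.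
    rewrite Ekey; ring.
  have -> : a * (y * (a * (m - 1) * p)) * t = (p * a * y) * (a * (m - 1) * t) by ring.
  apply: ler_wpM2l; last lra.
  apply: mulr_ge0; [apply: mulr_ge0|]; lra.
- apply: f2_le => //; first lra.
  have -> : (1 - y) * (1 - (1 - t)) = (1 - y) * t by ring.
  rewrite Ekey; lra.
- apply: f2_le => //; first lra.
  have -> : (1 - v) * (1 - (1 - t)) = (1 - v) * t by ring.
  have -> : a * (v * (1 - t)) = (a * v) * (1 - t) by ring.
  rewrite Evv'.
  have : 1 * (1 - t) <= (m - 1) * (1 - t) by apply: ler_wpM2r; lra.
  move=> hh.
  have -> : (m - 1) * (1 - v) * (1 - t) = (1 - v) * ((m - 1) * (1 - t)) by ring.
  apply: ler_wpM2l; lra.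
- move: Eim im0 him1; move: (1 / m) => im Eim im0 him1.
  apply: f2_le => //.
  have -> : a * (v * im) = (a * v) * im by ring.
  rewrite Evv'.
  have -> : (m - 1) * (1 - v) * im = (1 - v) * (m * im - im) by ring.
  rewrite Eim; lra.
Qed.
End Alg2.

Section Comb.
Variables (R : realType) (n : nat).

Lemma sum_pair (A B : finType) (H : A * B -> R) :
  \sum_(i : A * B) H i = \sum_(a : A) \sum_(b : B) H (a, b).
Proof. by rewrite pair_bigA; apply: eq_bigr => -[a b]. Qed.

Lemma isPsi3 (a b c : letter n) :
  isPsi (inr (a, b, c)) = (a.1 != b.1) && (c != linv b).
Proof.
rewrite /=; congr andb; case: b c => [i s] [j r] /=.
rewrite /linv /= !xpair_eqE; case: (i =P j) => [->|/eqP hij] /=.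
  by rewrite eqxx /=; case: s; case: r.
by rewrite eq_sym (negbTE hij).
Qed.

Lemma sum_Psi (G : raw n -> R) :
  \sum_(w : Psi n) G (val w) =
  \sum_(a : letter n) G (inl (a, a)) +
  \sum_(a : letter n) \sum_(b : letter n) \sum_(c : letter n)
     (if (a.1 != b.1) && (c != linv b) then G (inr (a, b, c)) else 0).
Proof.
transitivity (\sum_(w : raw n | isPsi w) G w).
  symmetry; rewrite (reindex_omap (val : Psi n -> raw n) insub); last first.
    by move=> i Pi; rewrite insubT.
  by apply: eq_bigl => -[i iP] /=; rewrite insubT ?iP //= eqxx.
rewrite big_sumType; congr (_ + _).
  rewrite big_mkcond [LHS]sum_pair; apply: eq_bigr => a _.
  rewrite (bigD1 a) //= eqxx big1 ?addr0 // => b /negbTE hb.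
  by rewrite eq_sym hb.
rewrite big_mkcond [LHS]sum_pair [LHS]sum_pair; apply: eq_bigr => a _.
apply: eq_bigr => b _; apply: eq_bigr => c _.
by rewrite isPsi3.
Qed.


Lemma sum_collapse (T : finType) (F : T -> R) (a : T) :
  (forall a', a' != a -> F a' = 0) -> \sum_(a' : T) F a' = F a.
Proof. by move=> h; rewrite (bigD1 a) //= big1 ?addr0 // => i /h. Qed.

Lemma card_letter : #|{: letter n}| = (n * 2)%N.
Proof. by rewrite card_prod card_ord card_bool. Qed.

Lemma sum_const_letter (k : R) : \sum_(c : letter n) k = k * (2 * n%:R).
Proof.
by rewrite sumr_const card_letter -[LHS]mulr_natr natrM; ring.
Qed.

Lemma sum_const_neq1 (d : letter n) (k : R) :
  \sum_(c | c != d) k = k * (2 * n%:R - 1).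
Proof.
have := sum_const_letter k; rewrite (bigD1 d) //= => h.
by rewrite mulrBr mulr1 -h; ring.
Qed.

Lemma sum_const_neq2 (d e : letter n) (k : R) : e != d ->
  \sum_(c | (c != d) && (c != e)) k = k * (2 * n%:R - 2).
Proof.
move=> hed; have := sum_const_neq1 d k; rewrite (bigD1 e) //= => h.
have -> : (2 * n%:R - 2 : R) = (2 * n%:R - 1) - 1 by ring.
by rewrite mulrBr mulr1 -h; ring.
Qed.

Lemma linv_neq (a : letter n) : (linv a != a).
Proof. by case: a => i s; rewrite /linv /= xpair_eqE eqxx /=; case: s. Qed.

Lemma neq1E (a b : letter n) : (b.1 != a.1) = (b != a) && (b != linv a).
Proof.
case: a => j r; case: b => i s; rewrite /linv /= !xpair_eqE.
by case: (i == j) => /=; case: s; case: r.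
Qed.

Lemma linv_inj (a b : letter n) : (linv a == linv b) = (a == b).
Proof.
case: a => j r; case: b => i s; rewrite /linv /= !xpair_eqE.
by case: r; case: s.
Qed.

Lemma linv1 (a : letter n) : (linv a).1 = a.1.
Proof. by []. Qed.

Variables (p v y : R).
Definition X3 (a b c : letter n) : R := if c == linv a then v else y.
Definition Xw (w : raw n) : R :=
  match w with inl _ => p | inr (a, b, c) => X3 a b c end.
Definition x0 (w : Psi n) : R := Xw (val w).
Definition tv : R := v + (2 * n%:R - 2) * y.

Lemma inner3 (a b : letter n) : a.1 != b.1 ->
  \sum_(c : letter n) (if (a.1 != b.1) && (c != linv b) then X3 a b c else 0) = tv.
Proof.
move=> hab; rewrite -big_mkcond /= (bigD1 (linv a)) /=; last first.
  by rewrite hab linv_inj; apply: contraNneq hab => ->.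
rewrite /X3 eqxx /tv; congr (_ + _).
have hne : linv a != linv b by rewrite linv_inj; apply: contraNneq hab => ->.
rewrite (eq_bigl (fun c => (c != linv b) && (c != linv a))); last first.
  by move=> c; rewrite hab.
rewrite (eq_bigr (fun _ => y)); last by move=> c /andP [_ /negbTE ->].
by rewrite sum_const_neq2 // mulrC.
Qed.

Lemma inner2 (a : letter n) :
  \sum_(b : letter n) \sum_(c : letter n)
     (if (a.1 != b.1) && (c != linv b) then X3 a b c else 0) = (2 * n%:R - 2) * tv.
Proof.
rewrite (eq_bigr (fun b => if b.1 != a.1 then tv else 0)); last first.
  move=> b _; case hb: (b.1 != a.1).
    by rewrite inner3 // eq_sym.
  by rewrite big1 // => c _; rewrite eq_sym hb.
rewrite -big_mkcond /= (eq_bigl (fun b => (b != a) && (b != linv a))); last first.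
  by move=> b; rewrite neq1E.
by rewrite sum_const_neq2 ?linv_neq // mulrC.
Qed.

Lemma sum_total : \sum_(w : Psi n) x0 w = 2 * n%:R * (p + (2 * n%:R - 2) * tv).
Proof.
rewrite /x0 (sum_Psi Xw) /= sum_const_letter.
rewrite (eq_bigr (fun a => (2 * n%:R - 2) * tv)); last by move=> a _; exact: inner2.
rewrite sum_const_letter; ring.
Qed.

Lemma sum_S2 (a b : letter n) : a.1 != b.1 -> \sum_(w in S2 a b) x0 w = tv.
Proof.
move=> hab; rewrite big_mkcond /=.
pose G := fun wr => if (size (word wr) == 3%N) &&
    (take 2 (word wr) == [:: a; b]) then Xw wr else 0.
rewrite (eq_bigr (fun w => G (val w))); last first.
  by move=> w _; rewrite inE.
rewrite (sum_Psi G) /G /= big1 ?add0r //.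
rewrite (sum_collapse (a:=a)); last first.
  move=> a' ha'; apply: big1 => b' _; apply: big1 => c _.
  by case: ifP => // _; rewrite eqseq_cons (negbTE ha').
rewrite (sum_collapse (a:=b)); last first.
  move=> b' hb'; apply: big1 => c _.
  by case: ifP => // _; rewrite !eqseq_cons (negbTE hb') andbF.
rewrite -(inner3 hab); apply: eq_bigr => c _.
by rewrite !eqxx.
Qed.

Lemma sum_S1 (a : letter n) : \sum_(w in S1 a) x0 w = p + (2 * n%:R - 2) * tv.
Proof.
rewrite big_mkcond /=.
pose G := fun wr => if take 1 (word wr) == [:: a] then Xw wr else 0.
rewrite (eq_bigr (fun w => G (val w))); last first.
  by move=> w _; rewrite inE.
rewrite (sum_Psi G) /G /=; congr (_ + _).
  rewrite (sum_collapse (a:=a)) ?eqxx // => a' ha'.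
  by rewrite eqseq_cons (negbTE ha').
rewrite (sum_collapse (a:=a)); last first.
  move=> a' ha'; apply: big1 => b' _; apply: big1 => c _.
  by case: ifP => // _; rewrite eqseq_cons (negbTE ha').
rewrite -(inner2 a); apply: eq_bigr => b _; apply: eq_bigr => c _.
by rewrite !eqxx.
Qed.

Lemma pword_inj : injective (@pword n).
Proof.
move=> w w' e; apply: val_inj; move: e; rewrite /pword.
case: (val w) => [[a b]|[[a b] c]]; case: (val w') => [[a' b']|[[a' b'] c']] //=.
  by case=> -> ->.
by case=> -> -> ->.
Qed.

Lemma x0_w2 (w : Psi n) (a : letter n) : pword w = [:: a; a] -> x0 w = p.
Proof. by rewrite /x0 /pword; case: (val w) => [[a' b']|[[a' b'] c']]. Qed.

Lemma x0_w3 (w : Psi n) (a b c : letter n) : pword w = [:: a; b; c] -> x0 w = X3 a b c.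
Proof. by rewrite /x0 /pword; case: (val w) => [[a' b']|[[a' b'] c']] //= [-> -> ->]. Qed.

End Comb.

Section Gen.
Variables (R : realType) (n : nat).

Lemma sum_single (x : Psi n -> R) (w0 : Psi n) s : pword w0 = s ->
  \sum_(w in Sw s) x w = x w0.
Proof.
move=> h0; rewrite (_ : Sw s = [set w0]) ?big_set1 //.
apply/setP => w; rewrite !inE -h0; apply/eqP/eqP => [h|->] //.
exact: pword_inj.
Qed.

Lemma sum_setC (x : Psi n -> R) (S : {set Psi n}) :
  \sum_(w in ~: S) x w = \sum_w x w - \sum_(w in S) x w.
Proof.
have h := bigID (fun w => w \in S) xpredT x.
have e1 : \sum_(w in ~: S) x w = \sum_(w | xpredT w && ~~ (w \in S)) x w.
  by apply: eq_bigl => w; rewrite inE.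
have e2 : \sum_(w in S) x w = \sum_(w | xpredT w && (w \in S)) x w.
  by apply: eq_bigl.
rewrite e1 e2; apply/eqP; rewrite eq_sym subr_eq addrC; apply/eqP; exact: h.
Qed.

Definition hdw (w : Psi n) : letter n :=
  match val w with inl (a, _) => a | inr (a, _, _) => a end.

Lemma in_S1 (w : Psi n) a : (w \in S1 a) = (hdw w == a).
Proof.
by rewrite inE /pword /hdw; case: (val w) => [[a' b']|[[a' b'] c']]; rewrite /= eqseq_cons andbT.
Qed.

Lemma S1_partition (x : Psi n -> R) :
  \sum_(a : letter n) \sum_(w in S1 a) x w = \sum_w x w.
Proof.
rewrite (eq_bigr (fun a => \sum_w (if w \in S1 a then x w else 0))); last first.
  by move=> a _; rewrite big_mkcond.
rewrite exchange_big; apply: eq_bigr => w _.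
rewrite (sum_collapse (a := hdw w)) ?in_S1 ?eqxx // => a' ha'.
by rewrite in_S1 eq_sym (negbTE ha').
Qed.

End Gen.

Section Main.
Variables (R : realType) (n : nat).

Lemma neq_of1 (A B : letter n) : A.1 != B.1 -> A != B.
Proof. by apply: contraNneq => ->. Qed.

Definition mk2 (A : letter n) : Psi n := exist _ (inl (A, A)) (eqxx A).

Lemma isPsi_mk3 (A B C : letter n) : A.1 != B.1 -> B.1 != C.1 ->
  isPsi (inr (A, B, C)).
Proof.
move=> h1 h2; rewrite isPsi3 h1 /=.
by apply: (neq_of1 (A:=C) (B:=linv B)); rewrite eq_sym.
Qed.

Lemma isPsi_aba (A B : letter n) : A.1 != B.1 -> isPsi (inr (A, B, A)).
Proof. by move=> h; apply: isPsi_mk3 => //; rewrite eq_sym. Qed.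

Lemma frE (r : relation n) (x : Psi n -> R) :
  fr r x = f2 (x r.1) (\sum_(w in r.2) x w).
Proof. by []. Qed.

Lemma partC (a : R) (hn : (2 <= n)%N) (ha : (2 * n%:R - 1) ^+ 2 < a)
  (hP : Pn n a = 0) : exists2 x : Psi n -> R, Delta x & Gmax x <= a.
Proof.
have hN : (2 : R) <= n%:R by rewrite (ler_nat R 2 n).
rewrite PnE in hP.
have := all_facts hN ha hP.
move: (pp n%:R a) (vv n%:R a) (tt n%:R a) (yy n%:R a) (mm (n%:R : R)) (KK (n%:R : R)) => p v t y m K.
case=> hp0 hp1 ht0 ht1 hv0 hv1 hy0 hy1 hs1 hs2 hm hK c1 c2 c3 c4 c5 c6.
have htv : tv n v y = t by rewrite /tv -hK.
have hS1 : p + (2 * n%:R - 2) * tv n v y = 1 / m by rewrite htv -hK.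
have htot : 2 * n%:R * (1 / m) = 1 :> R.
  by rewrite -hm mul1r mulfV //; apply/eqP; rewrite hm; lra.
pose x := x0 (n:=n) p v y.
have hxpos : forall w, 0 < x w.
  by move=> w; rewrite /x /x0; case: (val w) => [[? ?]|[[? ?] ?]] //=; rewrite /X3; case: ifP.
have hsum : \sum_w x w = 1 by rewrite /x sum_total hS1 htot.
exists x; first by split.
apply: bigmax_le => [|r]; first by have := a_ge hN ha; lra.
rewrite /inG => /orP[h|/orP[h|/orP[h|/orP[h|/orP[h|/orP[h|/orP[h|/orP[h|/orP[h|h]]]]]]]]];
  rewrite frE.
- case/existsP: h => A /andP[/eqP hw /eqP h2].
  by rewrite h2 sum_setC hsum /x sum_S1 hS1 (x0_w2 p v y hw).
- case/existsP: h => A /existsP[B /and3P[hAB /eqP hw /eqP h2]].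
  rewrite h2 sum_setC hsum /x (x0_w2 p v y hw).
  rewrite (sum_single _ (w0 := exist _ (inr (A, B, A)) (isPsi_aba hAB))) //.
  by rewrite /x0 /= /X3 eq_sym (negbTE (linv_neq A)).
- case/existsP: h => A /existsP[B /and3P[hAB /eqP hw /eqP h2]].
  rewrite h2 sum_setC hsum /x (x0_w3 p v y hw) (sum_single _ (w0 := mk2 B)) //.
  have hBA : B.1 != (linv A).1 by rewrite eq_sym.
  by rewrite /X3 (negbTE (neq_of1 hBA)).
- case/existsP: h => A /existsP[B /and3P[hAB /eqP hw /eqP h2]].
  rewrite h2 sum_setC hsum /x (x0_w3 p v y hw) sum_S2 // htv.
  have hBA : B.1 != (linv A).1 by rewrite eq_sym.
  by rewrite /X3 (negbTE (neq_of1 hBA)).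
- case/existsP: h => A /existsP[B /and3P[hAB /eqP hw /eqP h2]].
  rewrite h2 sum_setC hsum /x (x0_w3 p v y hw) sum_S2 1?eq_sym // htv.
  by rewrite /X3 eq_sym (negbTE (linv_neq A)).
- case/existsP: h => A /existsP[B /and3P[hAB /eqP hw /eqP h2]].
  rewrite h2 sum_setC hsum /x (x0_w3 p v y hw) (sum_single _ (w0 := mk2 A)) //.
  by rewrite /X3 eq_sym (negbTE (linv_neq A)).
- case/existsP: h => A /existsP[B /and3P[hAB /eqP hw /eqP h2]].
  rewrite h2 sum_setC hsum /x (x0_w3 p v y hw) sum_S2 1?eq_sym // htv.
  by rewrite /X3 eqxx.
- case/existsP: h => A /existsP[B /and3P[hAB /eqP hw /eqP h2]].
  rewrite h2 /x (x0_w3 p v y hw) sum_S1 hS1.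
  by rewrite /X3 eqxx.
- case/existsP: h => A /existsP[B /existsP[C /and5P[hAB hBC hAC /eqP hw /eqP h2]]].
  rewrite h2 sum_setC hsum /x (x0_w3 p v y hw) sum_S2 // htv.
  have hCA : C.1 != (linv A).1 by rewrite eq_sym.
  by rewrite /X3 (negbTE (neq_of1 hCA)).
- case/existsP: h => A /existsP[B /existsP[C /and5P[hAB hBC hAC /eqP hw /eqP h2]]].
  rewrite h2 sum_setC hsum /x (x0_w3 p v y hw) sum_S2 // htv.
  have hCA : C.1 != (linv A).1 by rewrite eq_sym.
  by rewrite /X3 (negbTE (neq_of1 hCA)).
Qed.


Lemma bigmax_ge (T : finType) (P : pred T) (F : T -> R) j :
  P j -> F j <= \big[Num.max/0]_(i | P i) F i.
Proof. move=> Pj; rewrite (bigD1 j) //= le_max lexx. done. Qed.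

Lemma f2_ge9 (u s : R) : 0 < u -> u <= 1/4 -> 0 < s -> s <= 1/4 -> 9 <= f2 u s.
Proof.
move=> hu hu4 hs hs4.
have h1 : 3 <= (1 - u) / u by rewrite ler_pdivlMr //; lra.
have h2 : 3 <= (1 - s) / s by rewrite ler_pdivlMr //; lra.
rewrite /f2; have -> : (9 : R) = 3 * 3 by rewrite -natrM.
by apply: ler_pM.
Qed.

Lemma term_le_sum (x : Psi n -> R) (S : {set Psi n}) w :
  (forall w, 0 < x w) -> w \in S -> x w <= \sum_(w' in S) x w'.
Proof.
move=> hpos hw; rewrite (bigD1 w) //= lerDl; apply: sumr_ge0 => i _.
exact: ltW.
Qed.

Lemma partA (hn : (2 <= n)%N) (x : Psi n -> R) : Delta x -> 9 <= Fmax x.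
Proof.
case=> hpos hsum.
have h0 : (0 < n)%N by apply: leq_trans hn.
have h1 : (1 < n)%N by [].
pose s := fun A => \sum_(w in S1 A) x w.
have hs : \sum_A s A = 1 by rewrite /s S1_partition.
have hN : (2 : R) <= n%:R by rewrite (ler_nat R 2 n).
have [A hA] : exists A, s A <= 1/4.
  case: (boolP [exists A, s A <= 1/4]) => [/existsP //|/existsPn hall].
  exfalso.
  have hlt : forall A, 1/4 < s A by move=> A; rewrite ltNge; exact: hall.
  pose a0 : letter n := (Ordinal h0, true).
  rewrite (bigD1 a0) //= in hs.
  have e1 := hlt a0.
  have e2 : \sum_(A | A != a0) (1/4 : R) <= \sum_(A | A != a0) s A.
    by apply: ler_sum => i _; exact: ltW.
  rewrite sum_const_neq1 in e2.
  lra.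
pose i0 : 'I_n := Ordinal h0.
pose i1 : 'I_n := Ordinal h1.
pose B : letter n := (if A.1 == i0 then i1 else i0, true).
have hAB : A.1 != B.1.
  rewrite /B /=; case: ifP => [/eqP ->|/negbT]; last by [].
  by apply/eqP => /(congr1 val).
have hB2 : B.1 != (linv A).1 by rewrite eq_sym.
pose w4 : Psi n := exist _ (inr (A, B, linv A)) (isPsi_mk3 hAB hB2).
pose r : relation n := (w4, S1 A).
have hr : inF r.
  rewrite /inF; apply/orP; right; apply/orP; right; apply/orP; right; apply/orP; left.
  apply/existsP; exists A; apply/existsP; exists B.
  by apply/and3P; split => //; apply/eqP.
have hw4 : w4 \in S1 A by rewrite in_S1 /hdw /=.
have hle := term_le_sum hpos hw4.
have hpos4 := hpos w4.
have hF : fr r x <= Fmax x by rewrite /Fmax; apply: bigmax_ge.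
apply: le_trans hF.
rewrite frE; change (9 <= f2 (x w4) (s A)).
have hle' : x w4 <= s A by exact: hle.
apply: f2_ge9; lra.
Qed.

Lemma inF_inG (r : relation n) : inF r -> inG r.
Proof.
rewrite /inF /inG.
case/orP => [h|/orP[h|/orP[h|/orP[h|h]]]].
- by apply/orP; left.
- by do 3! (apply/orP; right); apply/orP; left.
- by do 4! (apply/orP; right); apply/orP; left.
- by do 7! (apply/orP; right); apply/orP; left.
- by do 8! (apply/orP; right); apply/orP; left.
Qed.

Lemma FG (x : Psi n -> R) : Fmax x <= Gmax x.
Proof.
apply: bigmax_le; first exact: bigmax_ge_id.
move=> r hr; apply: le_bigmax_cond.
exact: inF_inG.
Qed.

End Main.

Unset Implicit Arguments.
Local Open Scope classical_set_scope.
Local Open Scope ring_scope.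

Theorem lemma5p3 (R : realType) (n : nat) (hn : (2 <= n)%N) :
  1 < beta_star R n /\ beta_star R n <= alpha_star R n /\
  (forall a : R, (2 * n%:R - 1) ^+ 2 < a -> Pn n a = 0 -> alpha_star R n <= a).
Proof.
have h0 : (0 < n)%N by apply: leq_trans hn.
have [xu hxu] : exists xu : Psi n -> R, Delta xu.
  pose k := #|{: Psi n}|.
  have hk : (0 < k)%N by apply/card_gt0P; exists (mk2 (Ordinal h0, true)).
  exists (fun _ => 1 / k%:R); split.
    by move=> _; rewrite divr_gt0 // ltr0n.
  rewrite sumr_const -[LHS]mulr_natr mul1r mulVf //.
  by rewrite pnatr_eq0 -lt0n.
pose EF := [set Fmax x | x in @Delta R n]%classic.
pose EG := [set Gmax x | x in @Delta R n]%classic.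
have hlbF : lbound EF 9 by move=> z [x hx <-]; exact: partA.
have hlbG : lbound EG 9.
  by move=> z [x hx <-]; apply: le_trans (FG x); exact: partA.
have neF : EF !=set0 by exists (Fmax xu), xu.
have neG : EG !=set0 by exists (Gmax xu), xu.
have hasF : has_lbound EF by exists 9.
have hasG : has_lbound EG by exists 9.
have hb9 : 9 <= beta_star R n by exact: lb_le_inf neF hlbF.
split; first lra.
split.
  apply: lb_le_inf neG _ => z [x hx <-].
  apply: le_trans (FG x).
  by apply: (ge_inf hasF); exists x.
move=> a ha hP; have [x hx hG] := partC hn ha hP.
apply: le_trans hG.
by apply: (ge_inf hasG); exists x.
Qed.
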